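(* Let $G$ be a graph with $n$ nodes and graph Laplacian $\mathbf{L}$, and let $\mathbf{L}=\mathbf{U}\mathbf{\Sigma}\mathbf{U}^T$ be an eigendecomposition of $\mathbf{L}$. Then for any $n\times n$ permutation matrix $\mathbf{M}$, the matrix $\mathbf{U}\mathbf{\Sigma}^{1/2}\mathbf{M}$ is adjacency-identifying.
   Context: Graphs are finite, undirected, without self-loops and without isolated nodes; $\mathbf{L}=\mathbf{D}-\mathbf{A}(G)$ with $\mathbf{D}$ the degree matrix and $\mathbf{A}(G)$ the adjacency matrix. In the eigendecomposition, $\mathbf{U}$ is orthogonal (columns are orthonormal eigenvectors) and $\mathbf{\Sigma}$ is diagonal with the (nonnegative) eigenvalues. $d_k>0$ is a fixed constant. A matrix $\mathbf{P}\in\mathbb{R}^{n\times e}$ is adjacency-identifying if there exist $\mathbf{W}^Q,\mathbf{W}^K\in\mathbb{R}^{e\times e}$ such that $\tilde{\mathbf{P}}=\frac{1}{\sqrt{d_k}}\mathbf{P}\mathbf{W}^Q(\mathbf{P}\mathbf{W}^K)^T$ satisfies $\tilde{\mathbf{P}}_{ij}=\max_k\tilde{\mathbf{P}}_{ik}\iff\mathbf{A}(G)_{ij}=1$ for all $i,j$. *)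

(* Defs.v *)
From HB Require Import structures.
From mathcomp Require Import all_boot all_order all_algebra all_fingroup.
Set Implicit Arguments. Unset Strict Implicit. Unset Printing Implicit Defensive.
Import Order.TTheory GRing.Theory Num.Theory.
Local Open Scope ring_scope.

Definition simple_graph n (e : rel 'I_n) : Prop :=
  (forall i j, e i j = e j i) /\ (forall i, ~~ e i i).
Definition no_isolated n (e : rel 'I_n) : Prop :=
  forall i, exists j, e i j.

Definition adjmx (R : nzRingType) n (e : rel 'I_n) : 'M[R]_n :=
  \matrix_(i, j) (e i j)%:R.
Definition degmx (R : nzRingType) n (e : rel 'I_n) : 'M[R]_n :=
  diag_mx (\row_i \sum_j adjmx R e i j).
Definition laplacian (R : nzRingType) n (e : rel 'I_n) : 'M[R]_n :=
  degmx R e - adjmx R e.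

(* Adjacency-identifying (for a fixed constant dk > 0). "Ptilde_ij = max_k
   Ptilde_ik" is written out as "Ptilde_ij is >= every Ptilde_ik". *)
Definition adjacency_identifying (R : rcfType) (dk : R) n m (e : rel 'I_n)
    (P : 'M[R]_(n, m)) : Prop :=
  exists WQ WK : 'M[R]_m,
    let Pt := (Num.sqrt dk)^-1 *: ((P *m WQ) *m (P *m WK)^T) in
    forall i j, (forall k, Pt i k <= Pt i j) <-> adjmx R e i j = 1.

(* Main.v *)
Require Import Defs.
From HB Require Import structures.
From mathcomp Require Import all_boot all_order all_algebra all_fingroup.
Import Order.TTheory GRing.Theory Num.Theory.
Local Open Scope ring_scope.

Theorem lemmaF9 (R : rcfType) (dk : R) (n : nat) (e : rel 'I_n)
    (U : 'M[R]_n) (d : 'rV[R]_n) (M : 'M[R]_n) :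
  0 < dk ->
  simple_graph e -> no_isolated e ->
  U^T *m U = 1%:M ->
  (forall i, 0 <= d 0 i) ->
  laplacian R e = U *m diag_mx d *m U^T ->
  is_perm_mx M ->
  adjacency_identifying dk e (U *m diag_mx (map_mx Num.sqrt d) *m M).
Proof.
move=> dk0 [esym eirr] noiso _ d0 hL /is_perm_mxP [s ->].
set P := (U *m _ *m _).
have PP : P *m P^T = laplacian R e.
  rewrite hL /P !trmx_mul tr_perm_mx tr_diag_mx.
  rewrite -!mulmxA (mulmxA (perm_mx s)) -perm_mxM mulgV perm_mx1 mul1mx.
  rewrite (mulmxA (diag_mx _)) mulmx_diag; congr (_ *m (diag_mx _ *m _)).
  by apply/rowP => j; rewrite !mxE -expr2 sqr_sqrtr.
exists 1%:M, (-1)%:M => /=.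
have -> : (-1)%:M = - (1%:M : 'M[R]_n) by apply/matrixP=> a b; rewrite !mxE mulNrn.
rewrite mulmx1 mulmxN mulmx1 linearN mulmxN PP.
set c := (Num.sqrt dk)^-1.
have c0 : 0 < c by rewrite invr_gt0 sqrtr_gt0.
have Lii : forall i, 0 <= laplacian R e i i.
  move=> i; rewrite /laplacian /degmx !mxE eqxx mulr1n /adjmx ?mxE (negbTE (eirr i)) subr0.
  by apply: sumr_ge0 => j _; rewrite mxE ler0n.
have Lij : forall i j, i != j -> laplacian R e i j = - (e i j)%:R.
  move=> i j ij; rewrite /laplacian /degmx !mxE (negbTE ij) mulr0n sub0r.
  by rewrite /adjmx ?mxE.
move=> i j.
have E : forall k, (c *: - laplacian R e) i k = c * - laplacian R e i k.
  by move=> k; rewrite !mxE.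
have adjE : adjmx R e i j = 1 <-> e i j.
  rewrite /adjmx mxE; case: (e i j) => /=; split => //.
  by move/eqP; rewrite eq_sym oner_eq0.
have neq : forall a b, e a b -> a != b.
  by move=> a b h; apply/eqP => ab; move: h; rewrite ab (negbTE (eirr b)).
split.
- move=> H; apply/adjE; have [k eik] := noiso i.
  have := H k; rewrite !E ler_pM2l // lerN2 (Lij _ _ (neq _ _ eik)) eik.
  case eij: (e i j) => //.
  have [<-|ij] := eqVneq i j.
    by move=> h; have := le_trans (Lii i) h; rewrite oppr_ge0 ler10.
  by rewrite (Lij _ _ ij) eij oppr0 oppr_ge0 ler10.
- move=> /adjE eij k; rewrite !E ler_pM2l // lerN2 (Lij _ _ (neq _ _ eij)) eij.
  have [<-|ik] := eqVneq i k.
    by apply: le_trans (Lii i); rewrite oppr_le0 ler01.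
  rewrite (Lij _ _ ik) lerN2; by case: (e i k); rewrite ?ler01 ?lexx.
Qed.
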